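(* Let $X_1,\dots,X_n$ be i.i.d. copies of a non-negative absolutely continuous random variable $X$, and let $1\le k\le n$. Let $\tau_{k|n}(\mathbf X)$ be the lifetime of the $k$-out-of-$n$ system with component lifetimes $X_1,\dots,X_n$, $(\tau_{k|n}(\mathbf X))_t=(\tau_{k|n}(\mathbf X)-t\mid\tau_{k|n}(\mathbf X)>t)$, and $\tau_{k|n}(\mathbf X_t)$ the lifetime of the $k$-out-of-$n$ system built from independent used components with lifetimes distributed as $(X_i-t\mid X_i>t)$. Then for any fixed $t\ge0$, $\tau_{k|n}(\mathbf X_t)\underset{c}{\prec}(\tau_{k|n}(\mathbf X))_t$.
   Context: All random variables are non-negative and absolutely continuous with support $[0,\infty)$. For a random variable $W$: density $f_W$, survival $\bar F_W$, hazard rate $r_W=f_W/\bar F_W$. $U\underset{c}{\prec}V$ means $r_U(x)/r_V(x)$ is increasing (non-decreasing) in $x\ge0$. A $k$-out-of-$n$ system functions as long as at least $k$ of its $n$ components function. *)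

(* Defs.v *)
From HB Require Import structures.
From mathcomp Require Import all_boot all_order all_algebra.
From mathcomp Require Import all_classical all_reals all_analysis.
Set Implicit Arguments. Unset Strict Implicit. Unset Printing Implicit Defensive.
Import Order.TTheory GRing.Theory Num.Theory.
Local Open Scope ring_scope.
Local Open Scope classical_set_scope.

Section Defs.
Variable R : realType.

Definition survival (f : R -> R) (x : R) : R :=
  fine (\int[lebesgue_measure]_(y in `]x, +oo[) (f y)%:E)%E.

(* Reliability polynomial of a k-out-of-n system with i.i.d. components:
   h(p) = P(at least k of n components work), each working w.p. p. *)
Definition kofn_poly (n k : nat) : {poly R} :=
  \sum_(k <= j < n.+1) ('C(n, j))%:R *: ('X ^+ j * (1 - 'X) ^+ (n - j)).

Record lifetime := Lifetime { dens : R -> R ; surv : R -> R }.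

Definition hazard (W : lifetime) (x : R) : R := dens W x / surv W x.

Definition lifetime_of (f : R -> R) : lifetime := Lifetime f (survival f).

Definition kofn (n k : nat) (W : lifetime) : lifetime :=
  Lifetime (fun x => (kofn_poly n k)^`().[surv W x] * dens W x)
           (fun x => (kofn_poly n k).[surv W x]).

Definition residual (t : R) (W : lifetime) : lifetime :=
  Lifetime (fun x => dens W (t + x) / surv W t)
           (fun x => surv W (t + x) / surv W t).

Definition c_order (U V : lifetime) : Prop :=
  forall x y : R, 0 <= x -> x <= y ->
    hazard U x / hazard V x <= hazard U y / hazard V y.

End Defs.

(* Main.v *)
Require Import Defs.
From HB Require Import structures.
From mathcomp Require Import all_boot all_order all_algebra.
From mathcomp Require Import all_classical all_reals all_analysis measurable_realfun.
From mathcomp Require Import ring lra.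
Import Order.TTheory GRing.Theory Num.Theory.
Local Open Scope ring_scope.

Section Surv.
Local Open Scope classical_set_scope.
Variables (R : realType) (f : R -> R).
Hypotheses (f_meas : measurable_fun setT f)
  (f_ge0 : forall x : R, 0 <= f x)
  (f_pos : forall x : R, 0 <= x -> 0 < f x)
  (f_tot : (\int[@lebesgue_measure R]_x (f x)%:E = 1)%E).

Let I (y : R) := (\int[@lebesgue_measure R]_(z in `]y, +oo[) (f z)%:E)%E.

Let mfE (D : set R) : measurable_fun D (fun z => (f z)%:E : \bar R).
Proof. apply/measurable_EFinP; exact: measurable_funS f_meas. Qed.

Let I_ge0 y : (0 <= I y)%E.
Proof. by apply: integral_ge0 => z _; rewrite lee_fin. Qed.

Let I_le1 y : (I y <= 1)%E.
Proof.
rewrite -f_tot /I; apply: ge0_subset_integral => //.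
- exact: mfE.
- by move=> z _; rewrite lee_fin.
Qed.

Let I_anti y1 y2 : y1 <= y2 -> (I y2 <= I y1)%E.
Proof.
move=> h; apply: ge0_subset_integral => //.
- exact: mfE.
- by move=> z _; rewrite lee_fin.
- move=> z /=; rewrite !in_itv /= !andbT => /(le_lt_trans h) //.
Qed.

Let I_gt0 y : 0 <= y -> (0 < I y)%E.
Proof.
move=> y0; rewrite lt_neqAle I_ge0 andbT; apply/negP => /eqP I0.
have : (\int[@lebesgue_measure R]_(z in `]y, +oo[) `|(f z)%:E| = 0)%E.
  transitivity (I y); last by [rewrite I0|rewrite -I0].
  rewrite /I; apply: eq_integral => z _; rewrite gee0_abs // lee_fin //.
move=> H0.
have [N [mN N0 sub]] := (ae_eq_integral_abs lebesgue_measure (measurable_itv `]y, +oo[%R) (mfE _)).1 H0.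
have : (lebesgue_measure (`]y, (y+1)%R[ : set R) <= lebesgue_measure N)%E.
  apply: le_measure; rewrite ?inE //.
  move=> z /= zin; apply: sub => /= /(_ _) H.
  have zin' : (`]y, +oo[ : set R) z.
    by move: zin; rewrite /= !in_itv /= andbT => /andP[].
  move: (H zin'); rewrite /cst => /eqP; rewrite eqe.
  move: zin'; rewrite /= in_itv /= andbT => yz.
  by rewrite gt_eqF // f_pos // (le_trans y0) // ltW.
rewrite N0 lebesgue_measure_itv /= lte_fin ltrDl ltr01 /=.
by rewrite -EFinD addrAC subrr add0r lee_fin ler10.
Qed.

Lemma surv_gt0 y : 0 <= y -> 0 < survival f y.
Proof. move=> y0; change (0 < fine (I y)); apply: fine_gt0; apply/andP; split; first exact: I_gt0.
by rewrite (le_lt_trans (I_le1 y)) // ltey. Qed.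

Lemma surv_le1 y : survival f y <= 1.
Proof.
change (fine (I y) <= 1); have := I_le1 y; have := I_ge0 y.
by case: (I y) => [r| |] //= _; rewrite lee_fin.
Qed.

Lemma surv_anti y1 y2 : y1 <= y2 -> survival f y2 <= survival f y1.
Proof.
move=> h; change (fine (I y2) <= fine (I y1)); have := @I_anti y1 y2 h.
have := I_le1 y1; have := I_ge0 y1; have := I_le1 y2; have := I_ge0 y2.
by case: (I y2) => [r| |] //; case: (I y1) => [r'| |] //=; rewrite !lee_fin.
Qed.
End Surv.

Section P.
Variable R : realType.

Lemma kofn_deriv_aux n d k : (1 <= k)%N -> (k + d = n)%N ->
  (kofn_poly R n k)^`() = ((n * 'C(n.-1, k.-1))%:R : R) *: ('X^(k.-1) * (1 - 'X)^+(n-k)).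
Proof.
elim: d k => [|d IH] k k1 kdn.
  rewrite addn0 in kdn; subst k.
  rewrite /kofn_poly big_nat1 !subnn !expr0 !mulr1 !binn scale1r.
  by rewrite derivXn -scaler_nat ?binn ?muln1.
have kn : (k < n)%N by rewrite -kdn -addSnnS leq_addr.
have -> : kofn_poly R n k = ('C(n, k))%:R *: ('X ^+ k * (1 - 'X) ^+ (n - k)) + kofn_poly R n k.+1.
  by rewrite /kofn_poly big_ltn // ltnS ltnW.
rewrite derivD IH //; last by rewrite addSnnS.
have e1 : (n * 'C(n.-1, k.-1) = k * 'C(n,k))%N by rewrite mul_bin_diag prednK.
have e2 : (n * 'C(n.-1, k) = (n - k) * 'C(n,k))%N by rewrite mul_bin_down.
rewrite e1 e2 /=.
have nk : (n - k = d.+1)%N by rewrite -kdn addnC -addnBA // subnn addn0.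
have nk1 : (n - k.+1 = d)%N by rewrite subnS nk.
rewrite nk nk1.
case: k k1 {IH kdn kn e1 e2 nk nk1} => // k' _ /=.
rewrite !derivCE /=.
rewrite -!mul_polyC !exprS.
ring.
Qed.
End P.

Section PL.
Variable R : realFieldType.
Variables (N : nat) (c : nat -> R).
Hypothesis c0 : forall i, 0 <= c i.
Definition Pv (x : R) := \sum_(i < N) c i * x ^+ i.

Lemma Pv_mono x y : 0 <= x -> x <= y -> Pv x <= Pv y.
Proof.
move=> x0 xy; apply: ler_sum => i _; apply: ler_wpM2l => //.
by apply: lerXn2r => //; rewrite nnegrE // (le_trans x0).
Qed.

Lemma Pv_ge0 x : 0 <= x -> 0 <= Pv x.
Proof. by move=> x0; apply: sumr_ge0 => i _; rewrite mulr_ge0 // exprn_ge0. Qed.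

Let term_aux (a b l : R) i j : 0 <= a -> a <= b -> 1 <= l -> (i <= j)%N ->
  0 <= (l ^+ j - l ^+ i) * (a ^+ i * b ^+ j - a ^+ j * b ^+ i).
Proof.
move=> a0 ab l1 ij; apply: mulr_ge0; first by rewrite subr_ge0 ler_weXn2l.
rewrite subr_ge0 -(subnK ij) !exprD.
have : a ^+ (j - i) <= b ^+ (j - i) by apply: lerXn2r => //; rewrite nnegrE // (le_trans a0).
move=> h.
have ha : 0 <= a ^+ i * b ^+ i by rewrite mulr_ge0 // exprn_ge0 // (le_trans a0).
have -> : a ^+ i * (b ^+ (j - i) * b ^+ i) = (a ^+ i * b ^+ i) * b ^+ (j - i) by ring.
have -> : a ^+ (j - i) * a ^+ i * b ^+ i = (a ^+ i * b ^+ i) * a ^+ (j - i) by ring.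
by apply: ler_wpM2l.
Qed.

Let term (a b l : R) i j : 0 <= a -> a <= b -> 1 <= l ->
  0 <= (l ^+ j - l ^+ i) * (a ^+ i * b ^+ j - a ^+ j * b ^+ i).
Proof.
move=> a0 ab l1; case: (leqP i j) => ij; first exact: term_aux.
have -> : (l ^+ j - l ^+ i) * (a ^+ i * b ^+ j - a ^+ j * b ^+ i) =
  (l ^+ i - l ^+ j) * (a ^+ j * b ^+ i - a ^+ i * b ^+ j) by ring.
by apply: term_aux => //; rewrite ltnW.
Qed.

Lemma Pv_logconv a b l : 0 <= a -> a <= b -> 1 <= l ->
  Pv b * Pv (l * a) <= Pv a * Pv (l * b).
Proof.
move=> a0 ab l1.
pose T1 (i j : 'I_N) := c i * c j * (a ^+ i * b ^+ j * l ^+ j).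
pose T2 (i j : 'I_N) := c i * c j * (a ^+ i * b ^+ j * l ^+ i).
have hA : Pv a * Pv (l * b) = \sum_i \sum_j T1 i j.
  rewrite /Pv mulr_suml; apply: eq_bigr => i _; rewrite mulr_sumr; apply: eq_bigr => j _.
  by rewrite /T1 exprMn; ring.
have hB : Pv b * Pv (l * a) = \sum_i \sum_j T2 i j.
  rewrite [RHS]exchange_big /Pv mulr_suml; apply: eq_bigr => i _; rewrite mulr_sumr; apply: eq_bigr => j _.
  by rewrite /T2 exprMn; ring.
have hA' : \sum_i \sum_j T1 i j = \sum_i \sum_j T1 j i by rewrite exchange_big.
have hB' : \sum_i \sum_j T2 i j = \sum_i \sum_j T2 j i by rewrite exchange_big.
suff : \sum_i \sum_j (T2 i j + T2 j i) <= \sum_i \sum_j (T1 i j + T1 j i).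
  rewrite hA hB.
  have -> : \sum_i \sum_j (T2 i j + T2 j i) = \sum_i \sum_j T2 i j + \sum_i \sum_j T2 j i.
    by rewrite -big_split; apply: eq_bigr => i _; rewrite big_split.
  have -> : \sum_i \sum_j (T1 i j + T1 j i) = \sum_i \sum_j T1 i j + \sum_i \sum_j T1 j i.
    by rewrite -big_split; apply: eq_bigr => i _; rewrite big_split.
  rewrite -hA' -hB'; lra.
apply: ler_sum => i _; apply: ler_sum => j _.
rewrite -subr_ge0.
have -> : T1 i j + T1 j i - (T2 i j + T2 j i) =
  (c i * c j) * ((l ^+ j - l ^+ i) * (a ^+ i * b ^+ j - a ^+ j * b ^+ i)).
  by rewrite /T1 /T2; ring.
by apply: mulr_ge0; [apply: mulr_ge0|apply: term].
Qed.

Lemma Pv_key a b a' b' : 0 < a -> a <= b -> a <= a' -> a' * b <= b' * a ->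
  Pv b * Pv a' <= Pv a * Pv b'.
Proof.
move=> a0 ab aa' H.
have a0' : a != 0 by rewrite gt_eqF.
pose l := a' / a.
have l1 : 1 <= l by rewrite /l ler_pdivlMr // mul1r.
have ea' : a' = l * a by rewrite /l divfK.
rewrite ea'; apply: (le_trans (Pv_logconv _ _ _ (ltW a0) ab l1)).
apply: ler_wpM2l; first exact: Pv_ge0 _ (ltW a0).
apply: Pv_mono; first by rewrite mulr_ge0 // ?(le_trans _ l1) // ltW // (lt_le_trans a0).
by rewrite /l mulrAC ler_pdivrMr.
Qed.
End PL.

Section E.
Variables (R : realType) (n k : nat).
Hypotheses (hk1 : (1 <= k)%N) (hkn : (k <= n)%N).
Let h := kofn_poly R n k.
Let m := (n - k)%N.
Let K : R := (n * 'C(n.-1, k.-1))%:R.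
Let c (i : nat) : R := ('C(n, k + i))%:R.
Let P (x : R) := @Pv R m.+1 c x.
Let r (u : R) := u / (1 - u).

Lemma E2 u : h^`().[u] = K * (u ^+ k.-1 * (1 - u) ^+ m).
Proof.
rewrite /h (@kofn_deriv_aux R n (n - k)%N k) //; last by rewrite subnKC.
by rewrite hornerZ hornerM hornerXn horner_exp hornerD hornerN hornerX hornerC.
Qed.

Lemma E1 u : h.[u] = \sum_(k <= j < n.+1) ('C(n, j))%:R * (u ^+ j * (1 - u) ^+ (n - j)).
Proof.
rewrite /h /kofn_poly horner_sum; apply: eq_bigr => j _.
by rewrite hornerZ hornerM hornerXn horner_exp hornerD hornerN hornerX hornerC.
Qed.

Lemma E3 u : 0 <= u -> u <= 1 -> u ^+ n <= h.[u].
Proof.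
move=> u0 u1; rewrite E1 big_nat_recr //= subnn expr0 mulr1 binn mul1r lerDr.
apply: sumr_ge0 => j _; rewrite mulr_ge0 ?ler0n // mulr_ge0 // exprn_ge0 //.
by rewrite subr_ge0.
Qed.

Lemma E4 u : (u != 1) || (m == 0)%N ->
  h.[u] = u ^+ k * (1 - u) ^+ m * P (r u).
Proof.
move=> hu; rewrite E1 /P /Pv -{1}(add0n k) big_addn.
have -> : (n.+1 - k = m.+1)%N by rewrite /m subSn.
rewrite big_mkord mulr_sumr; apply: eq_bigr => i _.
have im : (i <= m)%N by rewrite -ltnS.
have -> : (n - (i + k) = m - i)%N by rewrite /m addnC subnDA.
have em : (1 - u) ^+ m = (1 - u) ^+ (m - i) * (1 - u) ^+ i by rewrite -exprD subnK.
rewrite em /c addnC /r expr_div_n exprD.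
case: (posnP i) => [->|ip]; first by rewrite !expr0 subn0; field.
have u1 : 1 - u != 0.
  move: hu; rewrite subr_eq0 eq_sym; case: eqP => //= _ /eqP m0.
  by have := leq_trans ip im; rewrite m0.
have ui : (1 - u) ^+ i != 0 by rewrite expf_neq0.
by field.
Qed.

Lemma P_pos x : 0 <= x -> 0 < P x.
Proof.
move=> x0; rewrite /P /Pv big_ord_recl /= expr0 mulr1.
have h1 : 0 < c 0%N by rewrite /c addn0 ltr0n bin_gt0.
have h2 : 0 <= \sum_(i < m) c (bump 0 i) * x ^+ bump 0 i.
  by apply: sumr_ge0 => i _; rewrite mulr_ge0 ?ler0n // exprn_ge0.
lra.
Qed.

Lemma K_pos : 0 < K.
Proof.
rewrite /K ltr0n muln_gt0 bin_gt0; apply/andP; split; first exact: leq_trans hk1 hkn.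
by rewrite -!subn1 leq_sub2r.
Qed.

Definition ratio (s q F : R) :=
  ((h^`().[q/s] * (F/s)) / h.[q/s]) / ((h^`().[q] * F / h.[s]) / (h.[q]/h.[s])).

Lemma ratio_a s q F : 0 < s -> s <= 1 -> 0 < q -> q <= s -> 0 < F ->
  (q < s) || (m == 0)%N -> ratio s q F = P (r q) / P (r (q / s)).
Proof.
move=> s0 s1 q0 qs F0 hq.
have hs : 0 < h.[s] by apply: (lt_le_trans _ (E3 _ (ltW s0) s1)); rewrite exprn_gt0.
have p1 : (q / s != 1) || (m == 0)%N.
  case/orP: hq => [qs'|->]; last by rewrite orbT.
  by rewrite lt_eqF // ltr_pdivrMr // mul1r.
have q1 : (q != 1) || (m == 0)%N.
  case/orP: hq => [qs'|->]; last by rewrite orbT.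
  by rewrite lt_eqF // (lt_le_trans qs').
have r0 u : 0 <= u -> u <= 1 -> 0 <= r u.
  by move=> u0 u1; rewrite /r divr_ge0 // subr_ge0.
have qs1 : q / s <= 1 by rewrite ler_pdivrMr // mul1r.
have qs0 : 0 < q / s by rewrite divr_gt0.
have Pq := P_pos _ (r0 _ (ltW q0) (le_trans qs s1)).
have Pp := P_pos _ (r0 _ (ltW qs0) qs1).
rewrite /ratio !E2 (E4 _ p1) (E4 _ q1).
set p := q / s.
have ep : q = p * s by rewrite /p divfK // gt_eqF.
have em1 : (1 - p) ^+ m != 0.
  case/orP: p1 => [pp|/eqP ->]; last by rewrite expr0 oner_neq0.
  by rewrite expf_neq0 // subr_eq0 eq_sym.
have em2 : (1 - q) ^+ m != 0.
  case/orP: q1 => [pp|/eqP ->]; last by rewrite expr0 oner_neq0.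
  by rewrite expf_neq0 // subr_eq0 eq_sym.
have Pp' : 0 < P (r p) by [].
have p0 : 0 < p by [].
move: em1 em2 (gt_eqF Pq) (gt_eqF Pp') (gt_eqF hs) (gt_eqF K_pos) (gt_eqF F0) (gt_eqF s0) (gt_eqF p0).
rewrite ep.
set A := (1 - p) ^+ m; set B := (1 - p * s) ^+ m; set Pa := P (r (p * s)); set Pb := P (r p).
set H := h.[s].
move=> e1 e2 /negbT e3 /negbT e4 /negbT e5 /negbT e6 /negbT e7 /negbT e8 /negbT e9.
rewrite -(prednK hk1) /= !exprS; field.
have hn : n%:R != 0 :> R by rewrite pnatr_eq0 -lt0n (leq_trans hk1 hkn).
have hC : 'C(n.-1,k.-1)%:R != 0 :> R.
  by rewrite pnatr_eq0 -lt0n bin_gt0 -!subn1 leq_sub2r.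
by rewrite e1 e2 e3 e4 e5 e7 e8 e9 hn hC /= !expf_neq0 // mulf_neq0.
Qed.

Lemma ratio_b s F : 0 < s -> (m != 0)%N -> ratio s s F = 0.
Proof.
move=> s0 m0; rewrite /ratio divff ?gt_eqF // E2 subrr expr0n.
by rewrite (negbTE m0) /= !mulr0 !mul0r.
Qed.

Lemma Pm0 x y : (m == 0)%N -> P x = P y.
Proof. by move=> /eqP m0; rewrite /P /Pv m0 !big_ord1 !expr0. Qed.

Let c0 : forall i, 0 <= c i. Proof. by move=> i; rewrite ler0n. Qed.

Lemma ratio_mono s q1 q2 F1 F2 : 0 < s -> s <= 1 -> 0 < q2 -> q2 <= q1 -> q1 <= s ->
  0 < F1 -> 0 < F2 -> ratio s q1 F1 <= ratio s q2 F2.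
Proof.
move=> s0 s1 q20 q21 q1s F10 F20.
have q10 : 0 < q1 by apply: lt_le_trans q21.
case m0: (m == 0)%N.
  rewrite !ratio_a ?m0 ?orbT //; last exact: le_trans q21 q1s.
  by rewrite (Pm0 (r q1) (r q2) m0) (Pm0 (r (q1 / s)) (r (q2 / s)) m0).
have hm : (m != 0)%N by rewrite m0.
have q2s0 := le_trans q21 q1s.
move: q1s; rewrite le_eqVlt => /orP[/eqP ->|q1s'].
  rewrite ratio_b //.
  move: q2s0; rewrite le_eqVlt => /orP[/eqP ->|q2s]; first by rewrite ratio_b.
  rewrite ratio_a ?q2s //; last exact: ltW.
  apply: divr_ge0; apply: ltW; apply: P_pos; rewrite /r divr_ge0 // ?subr_ge0 //.
  - exact: ltW.
  - exact: (le_trans (ltW q2s) s1).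
  - by rewrite divr_ge0 // ltW.
  - by rewrite ler_pdivrMr // mul1r (le_trans (ltW q2s)).
have q2s : q2 < s by apply: le_lt_trans q1s'.
rewrite !ratio_a ?q1s' ?q2s //; try exact: ltW.
set p1 := q1 / s; set p2 := q2 / s.
have e1 : q1 = p1 * s by rewrite /p1 divfK // gt_eqF.
have e2 : q2 = p2 * s by rewrite /p2 divfK // gt_eqF.
have p10 : 0 < p1 by rewrite divr_gt0.
have p20 : 0 < p2 by rewrite divr_gt0.
have p11 : p1 < 1 by rewrite ltr_pdivrMr // mul1r.
have p21 : p2 <= p1 by rewrite ler_pM2r ?invr_gt0.
have rP u : 0 <= u -> 0 <= r u -> 0 < P (r u) by move=> _ ?; apply: P_pos.
have rge0 u : 0 <= u -> u < 1 -> 0 <= r u by move=> u0 u1; rewrite /r divr_ge0 // subr_ge0 ltW.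
have q11 : q1 < 1 by apply: lt_le_trans s1.
have q2l1 : q2 < 1 by apply: lt_le_trans s1.
have p21' : p2 < 1 by apply: le_lt_trans p11.
have Pp1 : 0 < P (r p1) by apply: P_pos; apply: rge0 => //; exact: ltW.
have Pp2 : 0 < P (r p2) by apply: P_pos; apply: rge0 => //; exact: ltW.
rewrite ler_pdivrMr // mulrAC ler_pdivlMr //.
have rmono u v : 0 <= u -> u <= v -> v < 1 -> r u <= r v.
  move=> u0 uv v1; have u1 : u < 1 by apply: le_lt_trans v1.
  rewrite /r ler_pdivrMr ?subr_gt0 // mulrAC ler_pdivlMr ?subr_gt0 //; nra.
apply: (@Pv_key R m.+1 c c0 (r q2) (r q1) (r p2) (r p1)).
- rewrite /r divr_gt0 // subr_gt0 //.
- by apply: rmono => //; exact: ltW.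
- apply: rmono => //; first exact: ltW.
  by rewrite e2 ger_pMr.
- rewrite /r !mulf_div ler_pdivrMr ?mulr_gt0 ?subr_gt0 //.
  rewrite [X in _ <= X]mulrAC ler_pdivlMr ?mulr_gt0 ?subr_gt0 //.
  rewrite e1 e2.
  have h1 : 0 <= p1 * p2 * s by apply: mulr_ge0; [apply: mulr_ge0|]; apply: ltW.
  have h2 : 0 <= (p1 - p2) * (1 - s) by rewrite mulr_ge0 // subr_ge0.
  have h3 := mulr_ge0 h1 h2.
  nra.
Qed.
End E.

Theorem corollary5p1 (R : realType) (f : R -> R) (n k : nat) (t : R)
  (f_meas : measurable_fun setT f)
  (f_ge0 : forall x : R, 0 <= f x)
  (f_neg : forall x : R, x < 0 -> f x = 0)
  (f_pos : forall x : R, 0 <= x -> 0 < f x)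
  (f_tot : (\int[@lebesgue_measure R]_x (f x)%:E = 1)%E)
  (hk1 : (1 <= k)%N) (hkn : (k <= n)%N) (ht : 0 <= t) :
  c_order (kofn n k (residual t (lifetime_of f)))
          (residual t (kofn n k (lifetime_of f))).
Proof.
move=> x y hx hxy; rewrite /hazard /=.
have hy : 0 <= y := le_trans hx hxy.
have tx : 0 <= t + x by rewrite addr_ge0.
have ty : 0 <= t + y by rewrite addr_ge0.
apply: (@ratio_mono R n k hk1 hkn).
- exact: surv_gt0 f_meas f_ge0 f_pos f_tot t ht.
- exact: surv_le1 f_meas f_ge0 f_tot t.
- exact: surv_gt0 f_meas f_ge0 f_pos f_tot (t + y) ty.
- by apply: surv_anti f_meas f_ge0 f_tot _ _ _; rewrite lerD2l.
- by apply: surv_anti f_meas f_ge0 f_tot _ _ _; rewrite lerDl.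
- exact: f_pos.
- exact: f_pos.
Qed.
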